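(* There is an absolute constant $c>0$ such that the following holds. Let $G$ be a finite abelian group, let $B$ be a regular Bohr set of rank $d$, let $A \subset B$ have relative density at least $\alpha>0$, and let $B', B''$ be nonempty subsets of $B_{c\alpha/d}$. Then either (1) there is an $x \in B$ such that $1_A*\mu_{B'}(x) \geq \tfrac{3}{4}\alpha$ and $1_A*\mu_{B''}(x) \geq \tfrac{3}{4}\alpha$, or (2) $\|1_A*\mu_{B'}\|_\infty \geq \tfrac{9}{8}\alpha$ or $\|1_A*\mu_{B''}\|_\infty \geq \tfrac{9}{8}\alpha$.
   Context: $f*g(x)=\sum_{y} f(y)g(x-y)$; $1_X$ indicator, $\mu_X=1_X/|X|$; $\|F\|_\infty=\max|F|$. Bohr sets: $\mathrm{Bohr}(\Gamma,\rho)=\{x: |\gamma(x)-1|\le\rho\ \forall\gamma\in\Gamma\}$ for $\Gamma\subset\widehat G$, $(\Gamma,\rho)$ part of the data, rank $|\Gamma|$; $B_\tau=\mathrm{Bohr}(\Gamma,\tau\rho)$. $B$ of rank $d$ is regular if $1-12d|\tau|\le |B_{1+\tau}|/|B|\le 1+12d|\tau|$ for $|\tau|\le 1/(12d)$. *)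

(* Defs.v *)
From HB Require Import structures.
From mathcomp Require Import all_boot all_order all_algebra.
Set Implicit Arguments. Unset Strict Implicit. Unset Printing Implicit Defensive.
Import Order.TTheory GRing.Theory Num.Theory.
Local Open Scope ring_scope.

Definition is_character (G : finZmodType) (C : numClosedFieldType)
  (g : {ffun G -> C}) : Prop :=
  g 0 = 1 /\ forall x y : G, g (x + y) = g x * g y.

Definition Bohr (G : finZmodType) (C : numClosedFieldType)
  (Gamma : seq {ffun G -> C}) (rho : C) : {set G} :=
  [set x : G | all (fun g : {ffun G -> C} => `|g x - 1| <= rho) Gamma].

Definition Bohr_dil (G : finZmodType) (C : numClosedFieldType)
  (Gamma : seq {ffun G -> C}) (rho tau : C) : {set G} :=
  Bohr Gamma (tau * rho).

Definition regular_Bohr (G : finZmodType) (C : numClosedFieldType)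
  (Gamma : seq {ffun G -> C}) (rho : C) : Prop :=
  let d : C := (size Gamma)%:R in
  forall tau : C, tau \is Num.real -> `|tau| <= 1 / (12 * d) ->
    1 - 12 * d * `|tau|
      <= (#|Bohr_dil Gamma rho (1 + tau)|)%:R / (#|Bohr Gamma rho|)%:R
    /\ (#|Bohr_dil Gamma rho (1 + tau)|)%:R / (#|Bohr Gamma rho|)%:R
      <= 1 + 12 * d * `|tau|.

Definition indic (G : finZmodType) (C : numClosedFieldType) (X : {set G})
  : G -> C := fun x => if x \in X then 1 else 0.

Definition mu (G : finZmodType) (C : numClosedFieldType) (X : {set G})
  : G -> C := fun x => indic C X x / (#|X|)%:R.

Definition conv (G : finZmodType) (C : numClosedFieldType) (f g : G -> C)
  : G -> C := fun x => \sum_(y : G) f y * g (x - y).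

(* Main.v *)
Require Import Defs.
From HB Require Import structures.
From mathcomp Require Import all_boot all_order all_algebra.
From mathcomp Require Import ring zify.
Import Order.TTheory GRing.Theory Num.Theory.
Local Open Scope ring_scope.

Lemma char_norm (G : finZmodType) (C : numClosedFieldType) (g : {ffun G -> C}) :
  is_character g -> forall y, `|g y| = 1.
Proof.
move=> [g0 gM] y.
have gN0 x : g x != 0.
  apply/negP=> /eqP gx0; have := gM x (- x); rewrite subrr g0 gx0 mul0r.
  by move/eqP; rewrite oner_eq0.
have P0 : \prod_x g x != 0 by apply/prodf_neq0 => x _; exact: gN0.
have E : \prod_x g x = \prod_x g x * g y ^+ #|G|.
  rewrite {1}(reindex_inj (addIr y)) /=.
  rewrite (eq_bigr (fun x => g x * g y)); last by move=> x _; rewrite gM.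
  by rewrite big_split /= prodr_const.
have Ey : g y ^+ #|G| = 1.
  by apply: (mulfI P0); rewrite mulr1 -E.
have n0 : (0 < #|G|)%N by apply/card_gt0P; exists 0.
apply/eqP; rewrite -(pexpr_eq1 n0 (normr_ge0 (g y))) -normrX Ey normr1.
by [].
Qed.

Lemma bohr_add (G : finZmodType) (C : numClosedFieldType)
  (Gamma : seq {ffun G -> C}) (rho d : C) y b :
  (forall g, g \in Gamma -> is_character g) ->
  y \in Bohr Gamma ((1 - d) * rho) -> b \in Bohr Gamma (d * rho) ->
  y + b \in Bohr Gamma rho.
Proof.
move=> ch; rewrite !inE => /allP hy /allP hb; apply/allP => g gG.
have [g0 gM] := ch g gG.
rewrite gM.
have -> : g y * g b - 1 = g y * (g b - 1) + (g y - 1) by ring.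
apply: (le_trans (ler_normD _ _)).
rewrite normrM char_norm ?ch // mul1r.
have -> : rho = d * rho + (1 - d) * rho by ring.
by apply: lerD; [apply: hb | apply: hy].
Qed.

Lemma sum_indic (G : finZmodType) (C : numClosedFieldType) (X : {set G}) :
  \sum_x indic C X x = (#|X|)%:R.
Proof. by rewrite /indic -big_mkcond /= sumr_const. Qed.

Lemma indic_ge0 (G : finZmodType) (C : numClosedFieldType) (X : {set G}) x :
  0 <= indic C X x.
Proof. by rewrite /indic; case: ifP. Qed.

Lemma conv_ge0 (G : finZmodType) (C : numClosedFieldType) (A B : {set G}) x :
  0 <= conv (indic C A) (mu C B) x.
Proof.
apply: sumr_ge0 => y _; apply: mulr_ge0; first exact: indic_ge0.
by apply: divr_ge0; [exact: indic_ge0 | exact: ler0n].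
Qed.

Lemma sum_mu (G : finZmodType) (C : numClosedFieldType) (X : {set G}) :
  X != set0 -> \sum_x mu C X x = 1.
Proof.
move=> X0; rewrite /mu -mulr_suml sum_indic divff //.
by rewrite pnatr_eq0 -lt0n card_gt0.
Qed.

Lemma sum_lower (G : finZmodType) (C : numClosedFieldType) (A B B' D : {set G}) :
  B' != set0 -> (forall y b, y \in D -> b \in B' -> y + b \in B) ->
  (#|A :&: D|)%:R <= \sum_(x in B) conv (indic C A) (mu C B') x.
Proof.
move=> B0 hD; rewrite /conv exchange_big /= -sum_indic.
apply: ler_sum => y _.
case: (boolP (y \in A :&: D)) => hy; last first.
  rewrite {1}/indic (negbTE hy); apply: sumr_ge0 => x _; apply: mulr_ge0.
    exact: indic_ge0.
  by apply: divr_ge0; [exact: indic_ge0 | exact: ler0n].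
move: (hy); rewrite inE => /andP [yA yD].
rewrite {1}/indic hy -mulr_sumr {1}/indic yA mul1r.
have -> : \sum_(x in B) mu C B' (x - y) = \sum_x mu C B' (x - y).
  rewrite big_mkcond; apply: eq_bigr => x _; case: ifP => // xB.
  rewrite /mu /indic; case: ifP => xyB; last by rewrite mul0r.
  by move: (hD _ _ yD xyB); rewrite addrC subrK xB.
by rewrite (reindex_inj (addIr y)) /=; under eq_bigr do rewrite addrK; rewrite sum_mu.
Qed.

Lemma sum_upper (G : finZmodType) (C : numClosedFieldType) (f : G -> C)
  (B : {set G}) (a e : C) :
  0 <= a -> (forall x, 0 <= f x) -> (forall x, f x <= a + e) ->
  \sum_(x in B) f x <= a * (#|B|)%:R + e * (#|[set x in B | a <= f x]|)%:R.
Proof.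
move=> a0 f0 fM.
set S := [set x in B | a <= f x].
have -> : (#|S|)%:R = \sum_(x in B) indic C S x.
  rewrite -sum_indic [RHS]big_mkcond /=; apply: eq_bigr => x _.
  by case: ifP => // xB; rewrite /indic inE xB.
rewrite mulr_sumr mulr_natr -sumr_const -big_split /=.
apply: ler_sum => x xB; rewrite /indic inE xB /=.
case: ifP => h; first by rewrite mulr1.
rewrite mulr0 addr0; apply: ltW.
by rewrite real_ltNge ?h // ger0_real.
Qed.

Lemma key_arith (C : numClosedFieldType) (alpha : C) (N q s : nat) :
  0 < alpha ->
  alpha * N%:R + (1 - 12 * 400%:R^-1 * alpha) * N%:R <= N%:R + q%:R ->
  q%:R <= 3 / 4 * alpha * N%:R + 3 / 8 * alpha * s%:R ->
  (176 * N <= 300 * s)%N.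
Proof.
move=> a0 h1 h2.
have h3 := le_trans h1 (lerD (lexx _) h2).
have E1 : alpha * N%:R + (1 - 12 * 400%:R^-1 * alpha) * N%:R
   = N%:R + alpha * (800%:R^-1 * (776 * N)%:R).
  by rewrite natrM; field.
have E2 : N%:R + (3 / 4 * alpha * N%:R + 3 / 8 * alpha * s%:R)
   = N%:R + alpha * (800%:R^-1 * (600 * N + 300 * s)%:R) :> C.
  by rewrite natrD !natrM; field.
move: h3; rewrite E1 E2 lerD2l ler_pM2l // ler_pM2l ?invr_gt0 ?ltr0n // ler_nat.
lia.
Qed.

Lemma one_side (G : finZmodType) (C : numClosedFieldType) (alpha : C)
  (A Bs B' D : {set G}) :
  0 < alpha -> B' != set0 ->
  (forall y b, y \in D -> b \in B' -> y + b \in Bs) ->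
  alpha * (#|Bs|)%:R + (1 - 12 * 400%:R^-1 * alpha) * (#|Bs|)%:R
    <= (#|Bs|)%:R + (#|A :&: D|)%:R ->
  (forall x, ~~ (9 / 8 * alpha <= `|conv (indic C A) (mu C B') x|)) ->
  (176 * #|Bs| <= 300 * #|[set x in Bs | (3 / 4 * alpha
                                 <= conv (indic C A) (mu C B') x)%R]|)%N.
Proof.
move=> a0 B0 hD h1 hn.
apply: (@key_arith C alpha _ _ _ a0 h1).
apply: le_trans (@sum_lower G C A Bs B' D B0 hD) _.
apply: sum_upper.
- by apply: mulr_ge0; [apply: divr_ge0; apply: ler0n | apply: ltW].
- by move=> x; apply: conv_ge0.
move=> x; have -> : 3 / 4 * alpha + 3 / 8 * alpha = 9 / 8 * alpha :> C by field.
have := hn x; rewrite ger0_norm ?conv_ge0 // => h.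
apply: ltW; rewrite real_ltNge ?h // ?ger0_real ?conv_ge0 //.
by apply: mulr_ge0; [apply: divr_ge0; apply: ler0n | apply: ltW].
Qed.

Lemma nat_fin (a b c d e : nat) : (176 * e <= 300 * c)%N -> (176 * e <= 300 * d)%N ->
  (a <= e)%N -> (0 < e)%N -> (a + b = c + d)%N -> (0 < b)%N.
Proof. lia. Qed.

Theorem lemma12 :
  exists c : rat, 0 < c /\
  forall (C : numClosedFieldType) (G : finZmodType)
         (Gamma : seq {ffun G -> C}) (rho : C),
    uniq Gamma ->
    (forall g, g \in Gamma -> is_character g) ->
    (0 < size Gamma)%N ->
    0 < rho ->
    regular_Bohr Gamma rho ->
  forall (alpha : C) (A B' B'' : {set G}),
    0 < alpha ->
    A \subset Bohr Gamma rho ->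
    alpha <= (#|A|)%:R / (#|Bohr Gamma rho|)%:R ->
    B' != set0 -> B'' != set0 ->
    B' \subset Bohr_dil Gamma rho (ratr c * alpha / (size Gamma)%:R) ->
    B'' \subset Bohr_dil Gamma rho (ratr c * alpha / (size Gamma)%:R) ->
    (exists2 x : G, x \in Bohr Gamma rho &
       (3 / 4 * alpha <= conv (indic C A) (mu C B') x
        /\ 3 / 4 * alpha <= conv (indic C A) (mu C B'') x))
    \/ ((exists x : G, 9 / 8 * alpha <= `|conv (indic C A) (mu C B') x|)
        \/ (exists x : G, 9 / 8 * alpha <= `|conv (indic C A) (mu C B'') x|)).
Proof.
exists (400%:R^-1); split; first by rewrite invr_gt0 ltr0n.
move=> C G Gamma rho uG ch d0 rho0 reg alpha A B' B'' a0 AB dens B'0 B''0 sB' sB''.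
have cE : ratr (400%:R^-1 : rat) = 400%:R^-1 :> C.
  by rewrite fmorphV rmorph_nat.
rewrite cE in sB' sB''.
move: reg; rewrite /regular_Bohr /= => reg.
set Bs := Bohr Gamma rho in AB dens reg *.
set delta := 400%:R^-1 * alpha / (size Gamma)%:R in sB' sB''.
have dn0 : 0 < (size Gamma)%:R :> C by rewrite ltr0n.
have N0 : (0 < #|Bs|)%N.
  rewrite lt0n; apply/negP => /eqP N0; move: dens; rewrite N0 invr0 mulr0 => h.
  by move: (lt_le_trans a0 h); rewrite ltxx.
have NC : 0 < (#|Bs|)%:R :> C by rewrite ltr0n.
have a1 : alpha <= 1.
  apply: le_trans dens _; rewrite ler_pdivrMr // mul1r ler_nat.
  exact: subset_leq_card.
have d0' : 0 <= delta.
  apply: divr_ge0; last exact: ler0n.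
  by apply: mulr_ge0; [rewrite invr_ge0 ler0n | exact: ltW].
have dle : `|- delta| <= 1 / (12 * (size Gamma)%:R).
  rewrite normrN ger0_norm //.
  have -> : delta = (12 * 400%:R^-1 * alpha) * (1 / (12 * (size Gamma)%:R)).
    rewrite /delta; field; by rewrite gt_eqF.
  apply: ler_piMl.
    by apply: divr_ge0; [exact: ler01 | apply: mulr_ge0; [exact: ler0n | exact: ltW]].
  apply: le_trans a1; apply: ler_piMl; first exact: ltW.
  by rewrite ler_pdivrMr ?ltr0n // mul1r ler_nat.
have rd : - delta \is Num.real by rewrite realN ger0_real.
have [reg1 _] := reg (- delta) rd dle.
set D := Bohr_dil Gamma rho (1 + - delta) in reg1.
rewrite normrN ger0_norm // ler_pdivlMr // in reg1.
have E12 : 12 * (size Gamma)%:R * delta = 12 * 400%:R^-1 * alpha.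
  rewrite /delta; field; by rewrite gt_eqF.
rewrite E12 in reg1.
have hD' : forall y b, y \in D -> b \in B' -> y + b \in Bs.
  move=> y b yD bB; apply: (@bohr_add G C Gamma rho delta y b ch yD).
  exact: (subsetP sB').
have hD'' : forall y b, y \in D -> b \in B'' -> y + b \in Bs.
  move=> y b yD bB; apply: (@bohr_add G C Gamma rho delta y b ch yD).
  exact: (subsetP sB'').
have DB : D \subset Bs.
  apply/subsetP => x; rewrite /D /Bohr_dil /Bs /Bohr !inE => /allP h.
  apply/allP => g gG; apply: le_trans (h g gG) _.
  by apply: ler_piMl; [exact: ltW | rewrite gerBl].
have h1 : alpha * (#|Bs|)%:R + (1 - 12 * 400%:R^-1 * alpha) * (#|Bs|)%:R
    <= (#|Bs|)%:R + (#|A :&: D|)%:R.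
  have card : (#|A| + #|D| <= #|Bs| + #|A :&: D|)%N.
    by rewrite -cardsUI leq_add2r subset_leq_card // subUset AB DB.
  rewrite ler_pdivlMr // in dens.
  apply: le_trans (lerD dens reg1) _; rewrite -!natrD ler_nat; exact: card.
case: (boolP [exists x, 9 / 8 * alpha <= `|conv (indic C A) (mu C B') x|]).
  by move=> /existsP [x hx]; right; left; exists x.
move=> hn'.
case: (boolP [exists x, 9 / 8 * alpha <= `|conv (indic C A) (mu C B'') x|]).
  by move=> /existsP [x hx]; right; right; exists x.
move=> hn''.
have n' : forall x, ~~ (9 / 8 * alpha <= `|conv (indic C A) (mu C B') x|).
  by move=> x; apply/negP => hx; case/negP: hn'; apply/existsP; exists x.
have n'' : forall x, ~~ (9 / 8 * alpha <= `|conv (indic C A) (mu C B'') x|).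
  by move=> x; apply/negP => hx; case/negP: hn''; apply/existsP; exists x.
have k' := @one_side G C alpha A Bs B' D a0 B'0 hD' h1 n'.
have k'' := @one_side G C alpha A Bs B'' D a0 B''0 hD'' h1 n''.
left.
set S' := [set x in Bs | _] in k'.
set S'' := [set x in Bs | _] in k''.
have U : (#|S' :|: S''| <= #|Bs|)%N.
  apply: subset_leq_card; rewrite subUset; apply/andP; split;
    by apply/subsetP => x; rewrite inE => /andP [].
have : (0 < #|S' :&: S''|)%N.
  by apply: (@nat_fin _ _ _ _ _ k' k'' U N0); rewrite cardsUI.
case/card_gt0P => x; rewrite !inE => /andP [/andP [xB h1'] /andP [_ h2']].
by exists x; [rewrite /Bs inE | split].
Qed.
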